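(* Let $\mathcal H$ be an infinite-dimensional complex Hilbert space and $D\subseteq\mathcal H$ a dense linear subspace. Let $\mathcal V_{fD}(\mathcal H)=\{t\in\mathcal V_f(\mathcal H)\mid t\text{ is bounded, or }D(t)=D\}$. Then $\mathcal V_{fD}(\mathcal H)$ is a sub-generalized effect algebra of $(\mathcal V_f(\mathcal H);\oplus,o)$, the operation $\oplus_{|\mathcal V_{fD}(\mathcal H)}$ is total, and $(\mathcal V_{fD}(\mathcal H);\oplus_{|\mathcal V_{fD}(\mathcal H)},o)$ is monotone Dedekind upwards and downwards $\sigma$-complete.
   Context: Bilinear forms $t$ on $\mathcal H$ are sesquilinear maps $D(t)\times D(t)\to\mathbb C$ on a dense linear subspace $D(t)$ (linear in the first argument); $t$ is positive if $t(x,x)\ge0$ on $D(t)$, bounded if $\sup\{t(x,x)\mid x\in D(t),\|x\|=1\}<\infty$. The sum $t+s$ has domain $D(t)\cap D(s)$. $o$ is the zero form on $\mathcal H$. $\mathcal V_f(\mathcal H)$ is the set of positive bilinear forms with dense domain such that $D(t)=\mathcal H$ whenever $t$ is bounded; $t\oplus s$ is defined iff $t$ or $s$ is bounded or $D(t)=D(s)$, and then $t\oplus s=t+s$; it is a generalized effect algebra. A subset $Q$ of a generalized effect algebra $(E;\oplus,0)$ is a sub-generalized effect algebra if $0\in Q$ and whenever $x\oplus y=z$ in $E$ with two of $x,y,z$ in $Q$, all three are in $Q$; $x\oplus_{|Q}y$ is defined iff $x\oplus y$ is defined and lies in $Q$. The induced order of a generalized effect algebra is $x\le y$ iff $x\oplus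 z=y$ for some $z$. It is monotone Dedekind upwards $\sigma$-complete if every increasing sequence with an upper bound has a supremum, and monotone Dedekind downwards $\sigma$-complete if every decreasing sequence has an infimum. *)

(* Defs.v *)
From mathcomp Require Import all_boot all_order all_algebra.
From mathcomp Require Import complex.
From mathcomp Require Import boolp classical_sets reals.
Set Implicit Arguments. Unset Strict Implicit. Unset Printing Implicit Defensive.
Import Order.TTheory GRing.Theory Num.Theory.
Local Open Scope ring_scope.
Local Open Scope classical_set_scope.

Record hilbert (R : realType) (H : lmodType R[i]) := Hilbert {
  ip : H -> H -> R[i];
  ip_linl : forall (a : R[i]) (x y z : H), ip (a *: x + y) z = a * ip x z + ip y z;
  ip_sym : forall x y : H, ip y x = Num.conj (ip x y);
  ip_ge0 : forall x : H, 0 <= ip x x;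
  ip_eq0 : forall x : H, ip x x = 0 -> x = 0;
  ip_complete : forall u : nat -> H,
    (forall e : R, 0 < e -> exists N : nat, forall m n : nat, (N <= m)%N -> (N <= n)%N ->
        Num.sqrt (complex.Re (ip (u m - u n) (u m - u n))) < e) ->
    exists l : H, forall e : R, 0 < e -> exists N : nat, forall n : nat, (N <= n)%N ->
        Num.sqrt (complex.Re (ip (u n - l) (u n - l))) < e
}.

Section Forms.
Variables (R : realType) (H : lmodType R[i]) (hs : hilbert H).

Definition hnorm (x : H) : R := Num.sqrt (complex.Re (ip hs x x)).

Definition infinite_dim : Prop :=
  forall n : nat, exists v : 'I_n -> H,
    forall c : 'I_n -> R[i], \sum_(i < n) c i *: v i = 0 -> forall i, c i = 0.

Definition lin_subspace (D : set H) : Prop :=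
  0 \in D /\ (forall x y, x \in D -> y \in D -> x + y \in D) /\
  (forall (a : R[i]) x, x \in D -> a *: x \in D).

Definition dense_subspace (D : set H) : Prop :=
  lin_subspace D /\
  forall (x : H) (e : R), 0 < e -> exists y, y \in D /\ hnorm (x - y) < e.

(* A bilinear form is a pair (domain, values).  Values outside
   D(t) x D(t) are irrelevant; we normalise them to 0 so that Leibniz
   equality of records is equality of forms. *)
Record form := Form { fdom : set H; fval : H -> H -> R[i] }.

Definition is_form (t : form) : Prop :=
  [/\ dense_subspace (fdom t),
      (forall (a : R[i]) x y z, x \in fdom t -> y \in fdom t -> z \in fdom t ->
          fval t (a *: x + y) z = a * fval t x z + fval t y z),
      (forall (a : R[i]) x y z, x \in fdom t -> y \in fdom t -> z \in fdom t ->
          fval t z (a *: x + y) = Num.conj a * fval t z x + fval t z y)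
    & (forall x y, ~ (x \in fdom t /\ y \in fdom t) -> fval t x y = 0)].

Definition positive_form (t : form) : Prop :=
  forall x, x \in fdom t -> 0 <= fval t x x.

Definition bounded_form (t : form) : Prop :=
  exists M : R, forall x, x \in fdom t -> hnorm x = 1 -> `|fval t x x| <= (M%:C)%C.

Definition form0 : form := Form setT (fun _ _ => 0).

Definition form_add (t s : form) : form :=
  Form (fdom t `&` fdom s)
       (fun x y => if (x \in fdom t `&` fdom s) && (y \in fdom t `&` fdom s)
                   then fval t x y + fval s x y else 0).

Definition Vf (t : form) : Prop :=
  [/\ is_form t, positive_form t & (bounded_form t -> fdom t = setT)].

(* t (+) s is defined iff t or s is bounded or D(t) = D(s); then t (+) s = t + s *)
Definition oplus_def (t s : form) : Prop :=
  bounded_form t \/ bounded_form s \/ fdom t = fdom s.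

Definition VfD (D : set H) (t : form) : Prop :=
  Vf t /\ (bounded_form t \/ fdom t = D).

End Forms.

(* Generic notions for partial algebras (E; def, op, zero), where     *)
(* E : T -> Prop is the carrier, def x y says "x (+) y is defined"     *)
(* and op x y is then its value.                                       *)
Section PartialAlg.
Variable T : Type.

Definition sub_gea (E : T -> Prop) (def : T -> T -> Prop) (op : T -> T -> T)
    (zero : T) (Q : T -> Prop) : Prop :=
  [/\ (forall x, Q x -> E x), Q zero &
      forall x y, E x -> E y -> def x y ->
        ((Q x /\ Q y) \/ (Q x /\ Q (op x y)) \/ (Q y /\ Q (op x y))) ->
        [/\ Q x, Q y & Q (op x y)]].

Definition restr_def (def : T -> T -> Prop) (op : T -> T -> T) (Q : T -> Prop)
    (x y : T) : Prop := def x y /\ Q (op x y).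

Definition ind_le (Q : T -> Prop) (def : T -> T -> Prop) (op : T -> T -> T)
    (x y : T) : Prop := exists z, [/\ Q z, def x z & op x z = y].

Definition is_sup (Q : T -> Prop) (le : T -> T -> Prop) (u : nat -> T) (s : T) :=
  [/\ Q s, (forall n, le (u n) s) &
      forall b, Q b -> (forall n, le (u n) b) -> le s b].

Definition is_inf (Q : T -> Prop) (le : T -> T -> Prop) (u : nat -> T) (s : T) :=
  [/\ Q s, (forall n, le s (u n)) &
      forall b, Q b -> (forall n, le b (u n)) -> le b s].

Definition mono_dedekind_up (Q : T -> Prop) (le : T -> T -> Prop) : Prop :=
  forall u : nat -> T, (forall n, Q (u n)) -> (forall n, le (u n) (u n.+1)) ->
    (exists b, Q b /\ forall n, le (u n) b) -> exists s, is_sup Q le u s.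

Definition mono_dedekind_down (Q : T -> Prop) (le : T -> T -> Prop) : Prop :=
  forall u : nat -> T, (forall n, Q (u n)) -> (forall n, le (u n.+1) (u n)) ->
    exists s, is_inf Q le u s.

End PartialAlg.

(* Main.v *)
Require Import Defs.
From mathcomp Require Import all_boot all_order all_algebra.
From mathcomp Require Import complex.
From mathcomp Require Import boolp classical_sets reals.
From mathcomp Require Import ring lra.
Set Implicit Arguments. Unset Strict Implicit. Unset Printing Implicit Defensive.
Import Order.TTheory GRing.Theory Num.Theory.
Local Open Scope ring_scope.
Local Open Scope classical_set_scope.
Local Notation Re := complex.Re.
Local Notation Im := complex.Im.

Section RSeq.
Variable R : realType.

Definition cvR (u : nat -> R) (l : R) :=
  forall e : R, 0 < e -> exists N, forall n, (N <= n)%N -> `|u n - l| < e.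

Lemma cvR_uniq u l m : cvR u l -> cvR u m -> l = m.
Proof.
move=> hl hm; apply/eqP; rewrite -subr_eq0 -normr_eq0; apply/eqP.
apply/le_anti; rewrite normr_ge0 andbT.
apply/ler_addgt0Pr => e e0; rewrite add0r.
have e2 : 0 < e / 2 by rewrite divr_gt0.
have [N1 h1] := hl _ e2; have [N2 h2] := hm _ e2.
have := h1 (maxn N1 N2) (leq_maxl _ _); have := h2 (maxn N1 N2) (leq_maxr _ _).
set x := u _ => a b.
have -> : l - m = (x - m) - (x - l) by ring.
apply: (le_trans (ler_normB _ _)); rewrite (splitr e); apply: ltW; exact: ltrD.
Qed.

Lemma cvR_const c : cvR (fun _ => c) c.
Proof. by move=> e e0; exists 0%N => n _; rewrite subrr normr0. Qed.

Lemma cvR_add u v l m : cvR u l -> cvR v m -> cvR (fun n => u n + v n) (l + m).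
Proof.
move=> hl hm e e0.
have e2 : 0 < e / 2 by rewrite divr_gt0.
have [N1 h1] := hl _ e2; have [N2 h2] := hm _ e2.
exists (maxn N1 N2) => n hn.
have a := h1 n (leq_trans (leq_maxl _ _) hn).
have b := h2 n (leq_trans (leq_maxr _ _) hn).
have -> : u n + v n - (l + m) = (u n - l) + (v n - m) by ring.
apply: (le_lt_trans (ler_normD _ _)); rewrite (splitr e); exact: ltrD.
Qed.

Lemma cvR_scale c u l : cvR u l -> cvR (fun n => c * u n) (c * l).
Proof.
move=> hl e e0.
have c1 : 0 < `|c| + 1 by rewrite ltr_wpDl.
have [N h] := hl (e / (`|c| + 1)) (divr_gt0 e0 c1).
exists N => n hn; rewrite -mulrBr normrM.
apply: (@le_lt_trans _ _ ((`|c| + 1) * `|u n - l|)).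
  by rewrite ler_wpM2r // lerDl.
by rewrite mulrC -ltr_pdivlMr //; exact: h.
Qed.

Lemma cvR_ext u v l : (forall n, u n = v n) -> cvR u l -> cvR v l.
Proof. by move=> huv h e e0; have [N hN] := h e e0; exists N => n hn; rewrite -huv; auto. Qed.

Lemma cvR_le u v l m : (forall n, u n <= v n) -> cvR u l -> cvR v m -> l <= m.
Proof.
move=> huv hl hm; apply/ler_addgt0Pr => e e0.
have e2 : 0 < e / 2 by rewrite divr_gt0.
have [N1 h1] := hl _ e2; have [N2 h2] := hm _ e2.
have := h1 (maxn N1 N2) (leq_maxl _ _); have := h2 (maxn N1 N2) (leq_maxr _ _).
have := huv (maxn N1 N2).
set x := u _; set y := v _ => xy.
rewrite !ltr_norml => /andP[b1 b2] /andP[a1 a2].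
have := splitr e; lra.
Qed.

Lemma cvR_incr (u : nat -> R) M : (forall n, u n <= u n.+1) -> (forall n, u n <= M) ->
  exists l, cvR u l.
Proof.
move=> inc bd.
have mono : forall n m, (n <= m)%N -> u n <= u m.
  move=> n m /subnK <-; elim: (m - n)%N => [|k IH]; first by rewrite add0n.
  by rewrite addSn; apply: le_trans IH _.
pose E := [set x | exists n, x = u n].
have hs : has_sup E by split; [exists (u 0%N); exists 0%N | exists M => x [n ->]; exact: bd].
exists (sup E) => e e0.
have [x [N ->] hx] := sup_adherent e0 hs.
exists N => n hn.
have un : u n <= sup E by apply: sup_upper_bound => //; exists n.
have := mono _ _ hn.
rewrite ler0_norm ?subr_le0 //; lra.
Qed.

Lemma cvR_cauchy (u : nat -> R) :
  (forall e, 0 < e -> exists N, forall n m, (N <= n)%N -> (N <= m)%N -> `|u n - u m| < e) ->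
  exists l, cvR u l.
Proof.
move=> hc.
have [N0 h0] := hc 1 ltr01.
pose E := [set x | exists N, forall n, (N <= n)%N -> x <= u n].
have ne : E (u N0 - 1).
  exists N0 => n hn; have := h0 n N0 hn (leqnn _); rewrite ltr_norml; lra.
have ub : forall x, E x -> x <= u N0 + 1.
  move=> x [N hN]; have := hN (maxn N N0) (leq_maxl _ _).
  have := h0 (maxn N N0) N0 (leq_maxr _ _) (leqnn _); rewrite ltr_norml; lra.
have hs : has_sup E by split; [exists (u N0 - 1) | exists (u N0 + 1)].
exists (sup E) => e e0.
have e3 : 0 < e / 3 by rewrite divr_gt0.
have [N h] := hc _ e3.
have lo : E (u N - e / 3).
  exists N => n hn; have := h n N hn (leqnn _); rewrite ltr_norml; lra.
have s1 : u N - e / 3 <= sup E by apply: sup_upper_bound.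
have s2 : sup E <= u N + e / 3.
  apply: ge_sup; first by exists (u N - e/3).
  move=> x [N' hN']; have := hN' (maxn N N') (leq_maxr _ _).
  have := h (maxn N N') N (leq_maxl _ _) (leqnn _); rewrite ltr_norml; lra.
exists N => n hn; have := h n N hn (leqnn _); rewrite !ltr_norml.
have ee : e = e / 3 + e / 3 + e / 3 by field.
lra.
Qed.

End RSeq.

Section CSeq.
Variable R : realType.
Local Notation C := R[i].

Lemma cReM (c z : C) : Re (c * z) = Re c * Re z - Im c * Im z.
Proof. by case: c => a b; case: z => x y. Qed.
Lemma cImM (c z : C) : Im (c * z) = Re c * Im z + Im c * Re z.
Proof. by case: c => a b; case: z => x y /=; rewrite addrC. Qed.
Lemma cReD (c z : C) : Re (c + z) = Re c + Re z.
Proof. by case: c => a b; case: z => x y. Qed.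
Lemma cImD (c z : C) : Im (c + z) = Im c + Im z.
Proof. by case: c => a b; case: z => x y. Qed.
Lemma ReRC (x : R) : Re (x%:C)%C = x. Proof. by []. Qed.
Lemma ImRC (x : R) : Im (x%:C)%C = 0. Proof. by []. Qed.
Lemma cext (c z : C) : Re c = Re z -> Im c = Im z -> c = z.
Proof. by case: c => a b; case: z => x y /= -> ->. Qed.

Definition cvC (u : nat -> C) (l : C) :=
  cvR (fun n => Re (u n)) (Re l) /\ cvR (fun n => Im (u n)) (Im l).

Lemma cvC_uniq u l m : cvC u l -> cvC u m -> l = m.
Proof. by move=> [a b] [c d]; apply: cext; [exact: cvR_uniq a c|exact: cvR_uniq b d]. Qed.

Lemma cvC_add u v l m : cvC u l -> cvC v m -> cvC (fun n => u n + v n) (l + m).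
Proof.
move=> [a b] [c d]; split.
  by rewrite cReD; apply: cvR_ext (cvR_add a c) => n; rewrite cReD.
by rewrite cImD; apply: cvR_ext (cvR_add b d) => n; rewrite cImD.
Qed.

Lemma cvC_mul c u l : cvC u l -> cvC (fun n => c * u n) (c * l).
Proof.
move=> [a b]; split.
  rewrite cReM -mulNr; apply: cvR_ext (cvR_add (cvR_scale (Re c) a) (cvR_scale (- Im c) b)) => n.
  by rewrite cReM mulNr.
rewrite cImM; apply: cvR_ext (cvR_add (cvR_scale (Re c) b) (cvR_scale (Im c) a)) => n.
by rewrite cImM.
Qed.

Lemma cvC_ext u v l : (forall n, u n = v n) -> cvC u l -> cvC v l.
Proof. by move=> e [a b]; split; [apply: cvR_ext a|apply: cvR_ext b] => n; rewrite e. Qed.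

Lemma cvC_real u l : cvR u l -> cvC (fun n => (u n)%:C%C) (l%:C)%C.
Proof. by move=> h; split => //=; apply: cvR_const. Qed.

Lemma cvC_const c : cvC (fun _ => c) c.
Proof. by split; apply: cvR_const. Qed.

End CSeq.

Section Sesq.
Variables (R : realType) (H : lmodType R[i]).
Local Notation C := R[i].

Definition sesq (Dm : set H) (f : H -> H -> C) :=
  (forall (a : C) x y z, x \in Dm -> y \in Dm -> z \in Dm ->
          f (a *: x + y) z = a * f x z + f y z) /\
  (forall (a : C) x y z, x \in Dm -> y \in Dm -> z \in Dm ->
          f z (a *: x + y) = Num.conj a * f z x + f z y).

Variables (Dm : set H) (f : H -> H -> C).
Hypothesis hDm : lin_subspace Dm.
Hypothesis hf : sesq Dm f.

Lemma ls0 : 0 \in Dm. Proof. by case: hDm. Qed.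
Lemma lsD x y : x \in Dm -> y \in Dm -> x + y \in Dm. Proof. by case: hDm => _ []; auto. Qed.
Lemma lsZ (a : C) x : x \in Dm -> a *: x \in Dm. Proof. by case: hDm => _ []; auto. Qed.
Lemma lsN x : x \in Dm -> - x \in Dm. Proof. by move=> h; rewrite -scaleN1r; apply: lsZ. Qed.
Lemma lsB x y : x \in Dm -> y \in Dm -> x - y \in Dm. Proof. by move=> a b; apply: lsD => //; apply: lsN. Qed.

Lemma s0l z : z \in Dm -> f 0 z = 0.
Proof.
move=> hz; have := hf.1 1 0 0 z ls0 ls0 hz; rewrite scale1r addr0 mul1r => h.
by apply: (addrI (f 0 z)); rewrite addr0 -h.
Qed.
Lemma s0r z : z \in Dm -> f z 0 = 0.
Proof.
move=> hz; have := hf.2 1 0 0 z ls0 ls0 hz; rewrite scale1r addr0 rmorph1 mul1r => h.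
by apply: (addrI (f z 0)); rewrite addr0 -h.
Qed.
Lemma sDl x y z : x \in Dm -> y \in Dm -> z \in Dm -> f (x + y) z = f x z + f y z.
Proof. by move=> *; rewrite -{1}[x]scale1r hf.1 // mul1r. Qed.
Lemma sDr x y z : x \in Dm -> y \in Dm -> z \in Dm -> f z (x + y) = f z x + f z y.
Proof. by move=> *; rewrite -{1}[x]scale1r hf.2 // rmorph1 mul1r. Qed.
Lemma sZl a x z : x \in Dm -> z \in Dm -> f (a *: x) z = a * f x z.
Proof. by move=> *; rewrite -[a *: x]addr0 hf.1 ?ls0 // s0l // addr0. Qed.
Lemma sZr a x z : x \in Dm -> z \in Dm -> f z (a *: x) = Num.conj a * f z x.
Proof. by move=> *; rewrite -[a *: x]addr0 hf.2 ?ls0 // s0r // addr0. Qed.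

Lemma sexp (a b : C) x y : x \in Dm -> y \in Dm ->
  f (a *: x + b *: y) (a *: x + b *: y) =
  a * Num.conj a * f x x + a * Num.conj b * f x y + b * Num.conj a * f y x
  + b * Num.conj b * f y y.
Proof.
move=> hx hy.
have hax := lsZ a hx; have hby := lsZ b hy.
rewrite sDl ?lsD // !sDr // !sZl // !sZr //; ring.
Qed.

Definition ii : C := complex.Complex 0 1.
Lemma iiii : ii * ii = -1. Proof. by apply: cext => /=; ring. Qed.
Lemma conj_ii : Num.conj ii = - ii. Proof. by apply: cext => /=; ring. Qed.
Lemma conj_Nii : Num.conj (- ii) = ii. Proof. by apply: cext => /=; ring. Qed.
Lemma conj_1 : Num.conj (1 : C) = 1. Proof. by apply: cext => /=; ring. Qed.
Lemma conj_N1 : Num.conj (-1 : C) = -1. Proof. by apply: cext => /=; ring. Qed.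
Lemma conj_real (x : R) : Num.conj (x%:C)%C = (x%:C)%C. Proof. by apply: cext => /=; ring. Qed.

Lemma polar x y : x \in Dm -> y \in Dm ->
  4%:R * f x y = f (x + y) (x + y) - f (x + (-1) *: y) (x + (-1) *: y)
     + ii * f (x + ii *: y) (x + ii *: y) - ii * f (x + (- ii) *: y) (x + (- ii) *: y).
Proof.
move=> hx hy.
have q1 := sexp 1 1 hx hy; have q2 := sexp 1 (-1) hx hy.
have q3 := sexp 1 ii hx hy; have q4 := sexp 1 (- ii) hx hy.
rewrite !scale1r in q1 q2 q3 q4.
rewrite q1 q2 q3 q4 conj_ii conj_Nii conj_1 conj_N1.
set u := f x x; set v := f x y; set w := f y x; set z := f y y.
move: iiii; move: ii => j hj.
apply/eqP; rewrite -subr_eq0; apply/eqP.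
transitivity ((j * j + 1) * (2%:R * v - 2%:R * w)); first by ring.
by rewrite hj addNr mul0r.
Qed.

End Sesq.

Section Pos.
Variables (R : realType) (H : lmodType R[i]).
Local Notation C := R[i].

Lemma ge0C (z : C) : 0 <= z -> z = ((Re z)%:C)%C /\ 0 <= Re z.
Proof.
rewrite lecE => /andP[/eqP h1 h2]; split => //.
by apply: cext => //=; rewrite -h1.
Qed.

Lemma cReMr (c : C) (x : R) : Re (c * (x%:C)%C) = Re c * x.
Proof. by rewrite cReM /= mulr0 subr0. Qed.

Lemma RC1 : (((1 : R)%:C)%C : C) = 1. Proof. by apply: cext. Qed.
Lemma RCN1 : (((-1 : R)%:C)%C : C) = -1. Proof. by apply: cext => //=; rewrite oppr0. Qed.

Variables (Dm : set H) (f : H -> H -> C).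
Hypothesis hDm : lin_subspace Dm.
Hypothesis hf : sesq Dm f.
Hypothesis hp : forall x, x \in Dm -> 0 <= f x x.

Definition dq x := Re (f x x).
Definition cr x y := Re (f x y + f y x).

Lemma dq_ge0 x : x \in Dm -> 0 <= dq x.
Proof. by move=> h; case: (ge0C (hp h)). Qed.
Lemma dqE x : x \in Dm -> f x x = ((dq x)%:C)%C.
Proof. by move=> h; case: (ge0C (hp h)). Qed.

Lemma dq_lin (a b : R) x y : x \in Dm -> y \in Dm ->
  dq ((a%:C)%C *: x + (b%:C)%C *: y) = a * a * dq x + a * b * cr x y + b * b * dq y.
Proof.
move=> hx hy; rewrite /dq (sexp hDm hf) // !conj_real.
rewrite /cr !cReD !cReM /=; ring.
Qed.

Lemma dq_add x y : x \in Dm -> y \in Dm -> dq (x + y) = dq x + cr x y + dq y.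
Proof.
move=> hx hy; have := dq_lin 1 1 hx hy.
by rewrite RC1 !scale1r !mulr1 !mul1r.
Qed.

Lemma dq_sub x y : x \in Dm -> y \in Dm -> dq (x - y) = dq x - cr x y + dq y.
Proof.
move=> hx hy; have := dq_lin 1 (-1) hx hy.
rewrite RCN1 RC1 scale1r scaleN1r => ->; ring.
Qed.

Lemma dq_par x y : x \in Dm -> y \in Dm -> dq (x + y) <= 2%:R * dq x + 2%:R * dq y.
Proof.
move=> hx hy; have := dq_ge0 (lsB hDm hx hy).
rewrite dq_sub // dq_add //; lra.
Qed.

Lemma cross x y rho : x \in Dm -> y \in Dm -> 0 < rho ->
  `|cr x y| <= rho * dq x + dq y / rho.
Proof.
move=> hx hy r0.
set s := Num.sqrt rho.
have s0 : 0 < s by rewrite sqrtr_gt0.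
have ss : s * s = rho by rewrite -expr2 sqr_sqrtr // ltW.
have a := dq_ge0 (lsD hDm (lsZ hDm (s%:C)%C hx) (lsZ hDm ((s^-1)%:C)%C hy)).
have b := dq_ge0 (lsD hDm (lsZ hDm (s%:C)%C hx) (lsZ hDm ((- s^-1)%:C)%C hy)).
rewrite dq_lin // in a; rewrite dq_lin // in b.
have e1 : s * s^-1 = 1 by rewrite mulfV // gt_eqF.
have e2 : s^-1 * s^-1 = rho^-1 by rewrite -ss invfM.
rewrite e1 ss e2 in a; rewrite mulrN e1 mulNr ss mulrNN e2 in b.
rewrite [dq y / _]mulrC.
rewrite ler_norml; apply/andP; split; lra.
Qed.

Lemma dq_cont x h rho : x \in Dm -> h \in Dm -> 0 < rho ->
  `|dq (x + h) - dq x| <= rho * dq x + dq h / rho + dq h.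
Proof.
move=> hx hh r0; rewrite dq_add //.
have -> : dq x + cr x h + dq h - dq x = cr x h + dq h by ring.
apply: (le_trans (ler_normD _ _)).
rewrite (ger0_norm (dq_ge0 hh)) lerD2r; exact: cross.
Qed.

End Pos.

Section Pos2.
Variables (R : realType) (H : lmodType R[i]).
Local Notation C := R[i].
Variables (Dm : set H) (f : H -> H -> C).
Hypothesis hDm : lin_subspace Dm.
Hypothesis hf : sesq Dm f.

Lemma ImJ (a : C) : Im (a * Num.conj a) = 0.
Proof. by case: a => u v /=; ring. Qed.

Lemma dqZ (a : C) x : x \in Dm -> dq f (a *: x) = Re (a * Num.conj a) * dq f x.
Proof.
move=> hx; rewrite /dq (sZl hDm hf) ?(lsZ hDm) // (sZr hDm hf) // mulrA.
by rewrite [Re (_ * f x x)]cReM ImJ mul0r subr0.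
Qed.
End Pos2.

Section Hil.
Variables (R : realType) (H : lmodType R[i]) (hs : hilbert H).
Local Notation C := R[i].

Lemma inT (x : H) : x \in [set: H]. Proof. by rewrite in_setE. Qed.
Lemma lsT : lin_subspace [set: H].
Proof. by split; [exact: inT | split => *; exact: inT]. Qed.

Lemma ip0l z : ip hs 0 z = 0.
Proof.
have := ip_linl hs 1 0 0 z; rewrite scale1r addr0 mul1r => h.
by apply: (addrI (ip hs 0 z)); rewrite addr0 -h.
Qed.

Lemma ipS : sesq [set: H] (ip hs).
Proof.
split=> a x y z _ _ _; first exact: ip_linl.
by rewrite [LHS]ip_sym ip_linl rmorphD rmorphM (ip_sym hs x z) (ip_sym hs y z).
Qed.

Lemma ipP x : x \in [set: H] -> 0 <= ip hs x x.
Proof. by move=> _; exact: ip_ge0. Qed.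

Definition n2 (x : H) := dq (ip hs) x.

Lemma n2_ge0 x : 0 <= n2 x. Proof. have := inT x. have := @dq_ge0 _ _ _ _ ipP x. move=> h1 h2. exact: (h1 h2). Qed.
Lemma n2_par x y : n2 (x + y) <= 2%:R * n2 x + 2%:R * n2 y.
Proof. exact (dq_par lsT ipS ipP (inT x) (inT y)). Qed.
Lemma n2Z a x : n2 (a *: x) = Re (a * Num.conj a) * n2 x.
Proof. exact (dqZ lsT ipS a (inT x)). Qed.
Lemma n2N x : n2 (- x) = n2 x.
Proof.
rewrite -scaleN1r n2Z.
have -> : Re ((-1 : C) * Num.conj (-1)) = 1 by rewrite conj_N1 mulrNN mulr1.
by rewrite mul1r.
Qed.
Lemma n2B x y : n2 (x - y) = n2 (y - x).
Proof. by rewrite -n2N opprB. Qed.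

Lemma n20 : n2 0 = 0. Proof. by rewrite /n2 /dq ip0l. Qed.

Lemma hnormE x : hnorm hs x = Num.sqrt (n2 x). Proof. by []. Qed.

Lemma hnorm_lt x e : 0 < e -> hnorm hs x < e -> n2 x < e ^+ 2.
Proof.
move=> e0; rewrite hnormE => h.
rewrite -(sqr_sqrtr (n2_ge0 x)).
by rewrite !expr2; apply: ltr_pM; rewrite ?sqrtr_ge0.
Qed.

Definition vcv (v : nat -> H) (x : H) :=
  forall e : R, 0 < e -> exists N, forall n, (N <= n)%N -> n2 (v n - x) < e.

Lemma vcv_add u v x y : vcv u x -> vcv v y -> vcv (fun n => u n + v n) (x + y).
Proof.
move=> hu hv e e0.
have e4 : 0 < e / 4%:R by rewrite divr_gt0.
have [N1 h1] := hu _ e4; have [N2 h2] := hv _ e4.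
exists (maxn N1 N2) => n hn.
have a := h1 n (leq_trans (leq_maxl _ _) hn).
have b := h2 n (leq_trans (leq_maxr _ _) hn).
have -> : u n + v n - (x + y) = (u n - x) + (v n - y).
  by rewrite opprD addrACA.
apply: (le_lt_trans (n2_par _ _)).
have ee : e = 2%:R * (e / 4%:R) + 2%:R * (e / 4%:R) by field.
rewrite [X in _ < X]ee; apply: ltrD; rewrite ltr_pM2l //.
Qed.

Lemma vcv_scale a u x : vcv u x -> vcv (fun n => a *: u n) (a *: x).
Proof.
move=> hu e e0.
set k := Re (a * Num.conj a).
have k0 : 0 < k + 1.
  have : 0 <= a * Num.conj a by apply: mul_conjC_ge0.
  by move/ge0C => [_ h]; rewrite /k ltr_wpDl.
have [N h] := hu _ (divr_gt0 e0 k0).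
exists N => n hn.
rewrite -scalerBr n2Z -/k.
have k1 : 0 <= k.
  have : 0 <= a * Num.conj a by apply: mul_conjC_ge0.
  by move/ge0C => [].
apply: (@le_lt_trans _ _ ((k + 1) * n2 (u n - x))).
  by rewrite ler_wpM2r ?n2_ge0 // lerDl.
by rewrite mulrC -ltr_pdivlMr //; exact: h.
Qed.

Lemma vcv_const x : vcv (fun _ => x) x.
Proof.
move=> e e0; exists 0%N => n _; rewrite subrr.
by rewrite n20.
Qed.

End Hil.

Section Cont.
Variables (R : realType) (H : lmodType R[i]) (hs : hilbert H).
Local Notation C := R[i].
Variables (Dm : set H) (f : H -> H -> C).
Hypothesis hDm : lin_subspace Dm.
Hypothesis hf : sesq Dm f.
Hypothesis hp : forall x, x \in Dm -> 0 <= f x x.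
Variable M : R.
Hypothesis M0 : 0 < M.
Hypothesis hb : forall p, p \in Dm -> dq f p <= M * n2 hs p.

Lemma cauchy2 a b x : (forall k, a k \in Dm) -> (forall k, b k \in Dm) ->
  vcv hs a x -> vcv hs b x ->
  forall e, 0 < e -> exists N, forall n m, (N <= n)%N -> (N <= m)%N ->
    `|dq f (a n) - dq f (b m)| < e.
Proof.
move=> ha hbD va vb e e0.
set K := 2%:R + 2%:R * n2 hs x.
have K0 : 0 < K by rewrite /K ltr_wpDr ?mulr_ge0 ?n2_ge0.
have [N1 h1] := vb 1 ltr01.
set rho := e / (2%:R * M * K).
have r0 : 0 < rho by rewrite divr_gt0 // !mulr_gt0.
set c := rho^-1 + 1.
have c0 : 0 < c by rewrite /c ltr_wpDl // invr_ge0 ltW.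
set d := e / (8%:R * M * c).
have d0 : 0 < d by rewrite divr_gt0 // !mulr_gt0.
have [N2 h2] := va d d0; have [N3 h3] := vb d d0.
exists (maxn N1 (maxn N2 N3)) => n m hn hm.
have hn2 : (N2 <= n)%N by apply: leq_trans hn; rewrite leq_max leq_maxl orbT.
have hm1 : (N1 <= m)%N by apply: leq_trans hm; rewrite leq_maxl.
have hm3 : (N3 <= m)%N by apply: leq_trans hm; rewrite leq_max leq_maxr orbT.
have bK : n2 hs (b m) <= K.
  have -> : b m = (b m - x) + x by rewrite subrK.
  apply: (le_trans (n2_par _ _ _)); have := h1 _ hm1; rewrite /K lerD2r -[X in _ <= X]mulr1 => h; rewrite ler_pM2l //; exact: ltW.
have hD : a n - b m \in Dm by apply: lsB.
have hh : n2 hs (a n - b m) < 4%:R * d.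
  have -> : a n - b m = (a n - x) + (x - b m) by rewrite addrA subrK.
  apply: (le_lt_trans (n2_par _ _ _)); rewrite [n2 _ (x - _)]n2B.
  have -> : 4%:R * d = 2%:R * d + 2%:R * d by ring.
  apply: ltrD; rewrite ltr_pM2l //; [exact: h2 | exact: h3].
have := dq_cont hDm hf hp (hbD m) hD r0.
have ee : b m + (a n - b m) = a n by rewrite addrC subrK.
rewrite ee => hc.
apply: (le_lt_trans hc).
have t1 : rho * dq f (b m) <= rho * (M * K).
  rewrite ler_pM2l //; apply: (le_trans (hb (hbD m))); rewrite ler_pM2l //.
have t2 : dq f (a n - b m) < M * (4%:R * d).
  by apply: (le_lt_trans (hb hD)); rewrite ltr_pM2l.
have t3 : dq f (a n - b m) / rho + dq f (a n - b m) = c * dq f (a n - b m).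
  by rewrite /c mulrDl mul1r mulrC.
rewrite -addrA t3.
have t4 : c * dq f (a n - b m) < c * (M * (4%:R * d)) by rewrite ltr_pM2l.
have e1 : rho * (M * K) = e / 2%:R.
  rewrite /rho; field; rewrite ?gt_eqF //.
have e2 : c * (M * (4%:R * d)) = e / 2%:R.
  rewrite /d; field; rewrite ?gt_eqF //.
rewrite (splitr e); rewrite e1 in t1; rewrite e2 in t4.
exact: ler_ltD.
Qed.

Lemma diag_cv a x : (forall k, a k \in Dm) -> vcv hs a x ->
  exists L, cvR (fun k => dq f (a k)) L.
Proof.
move=> ha va; apply: cvR_cauchy => e e0.
exact: (cauchy2 ha ha va va e0).
Qed.

Lemma diag_same a b x L : (forall k, a k \in Dm) -> (forall k, b k \in Dm) ->
  vcv hs a x -> vcv hs b x -> cvR (fun k => dq f (a k)) L -> cvR (fun k => dq f (b k)) L.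
Proof.
move=> ha hbb va vb cl e e0.
have e2 : 0 < e / 2%:R by rewrite divr_gt0.
have [N1 h1] := cl _ e2.
have [N2 h2] := cauchy2 ha hbb va vb e2.
exists (maxn N1 N2) => n hn.
have a1 := h1 n (leq_trans (leq_maxl _ _) hn).
have a2 := h2 n n (leq_trans (leq_maxr _ _) hn) (leq_trans (leq_maxr _ _) hn).
have -> : dq f (b n) - L = (dq f (a n) - L) - (dq f (a n) - dq f (b n)) by ring.
apply: (le_lt_trans (ler_normB _ _)); rewrite (splitr e); exact: ltrD.
Qed.

Lemma diag_in a x : (forall k, a k \in Dm) -> x \in Dm -> vcv hs a x ->
  cvR (fun k => dq f (a k)) (dq f x).
Proof.
move=> ha hx va.
have hc : forall k : nat, (fun _ => x) k \in Dm by [].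
exact: (diag_same hc ha (vcv_const hs x) va (cvR_const _)).
Qed.

End Cont.

Arguments ii {R}.

Section Polq.
Variables (R : realType) (H : lmodType R[i]).
Local Notation C := R[i].

Definition polq (q : H -> R) (x y : H) : C :=
  ((q (x + y))%:C%C - (q (x + (-1) *: y))%:C%C + ii * (q (x + ii *: y))%:C%C
    - ii * (q (x + (- ii) *: y))%:C%C) / 4%:R.

Lemma polar_dq (Dm : set H) f x y : lin_subspace Dm -> sesq Dm f ->
  (forall x, x \in Dm -> 0 <= f x x) -> x \in Dm -> y \in Dm ->
  f x y = polq (dq f) x y.
Proof.
move=> hDm hf hp hx hy.
have h4 : (4%:R : C) != 0 by rewrite pnatr_eq0.
have e4 : forall S : C, 4%:R * (S / 4%:R) = S by move=> S; rewrite mulrC divfK.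
apply: (mulfI h4); rewrite /polq e4 (polar hDm hf) //.
rewrite !(dqE hp) // ?(lsD hDm) // (lsZ hDm) //.
Qed.

Lemma cvC_polq (qk : nat -> H -> R) q (a b : nat -> H) x y :
  cvR (fun k => qk k (a k + b k)) (q (x + y)) ->
  cvR (fun k => qk k (a k + (-1) *: b k)) (q (x + (-1) *: y)) ->
  cvR (fun k => qk k (a k + ii *: b k)) (q (x + ii *: y)) ->
  cvR (fun k => qk k (a k + (-ii) *: b k)) (q (x + (-ii) *: y)) ->
  cvC (fun k => polq (qk k) (a k) (b k)) (polq q x y).
Proof.
move=> h1 h2 h3 h4.
have := cvC_mul (4%:R^-1) (cvC_add (cvC_add (cvC_add (cvC_real h1)
  (cvC_mul (-1) (cvC_real h2))) (cvC_mul ii (cvC_real h3))) (cvC_mul (- ii) (cvC_real h4))).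
move=> h.
have -> : polq q x y = (4%:R^-1 : C) * ((((q (x + y))%:C%C + -1 * (q (x + (-1) *: y))%:C%C)
   + ii * (q (x + ii *: y))%:C%C) + - ii * (q (x + (- ii) *: y))%:C%C) by rewrite /polq; ring.
by apply: cvC_ext h => k; rewrite /polq; ring.
Qed.

End Polq.

Section Ext.
Variables (R : realType) (H : lmodType R[i]) (hs : hilbert H).
Local Notation C := R[i].
Variables (D : set H) (hD : dense_subspace hs D).
Variables (w : H -> H -> C).
Hypothesis hw : sesq D w.
Hypothesis hwp : forall x, x \in D -> 0 <= w x x.
Variable M : R.
Hypothesis M0 : 0 < M.
Hypothesis hwb : forall p, p \in D -> dq w p <= M * n2 hs p.

Let hDl : lin_subspace D := hD.1.

Lemma app_ex x : {a : nat -> H | (forall k, a k \in D) /\ vcv hs a x}.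
Proof.
have : forall k : nat, exists y, y \in D /\ hnorm hs (x - y) < (k.+1%:R)^-1.
  by move=> k; apply: hD.2; rewrite invr_gt0.
move/choice => [g hg]; exists g; split => [k|]; first by case: (hg k).
move=> e e0; have [N hN] := ltr_add_invr e0; rewrite add0r in hN.
exists N => n hn; rewrite n2B.
have [_ h] := hg n.
have t0 : 0 < (n.+1%:R : R)^-1 by rewrite invr_gt0.
have := hnorm_lt t0 h => h2.
apply: (lt_le_trans h2); apply: (le_trans (y := (n.+1%:R : R)^-1)).
  rewrite expr2 -[X in _ <= X]mulr1 ler_pM2l // invf_le1 ?ler1n //.
apply: (le_trans (y := (N.+1%:R : R)^-1)); last exact: ltW.
by rewrite lef_pV2 ?posrE // ler_nat.
Qed.

Definition app x := sval (app_ex x).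
Lemma appD x k : app x k \in D. Proof. by case: (svalP (app_ex x)) => h _; apply: h. Qed.
Lemma appV x : vcv hs (app x) x. Proof. by case: (svalP (app_ex x)) => _ h; apply: h. Qed.

Definition E x := sval (cid (diag_cv hDl hw hwp M0 hwb (@appD x) (appV x))).

Lemma E_spec x a : (forall k, a k \in D) -> vcv hs a x -> cvR (fun k => dq w (a k)) (E x).
Proof.
move=> ha va.
have h := svalP (cid (diag_cv hDl hw hwp M0 hwb (@appD x) (appV x))).
exact: (diag_same hDl hw hwp M0 hwb (@appD x) ha (appV x) va h).
Qed.

Definition ext x y := polq E x y.

Lemma ext_lim a b x y : (forall k, a k \in D) -> (forall k, b k \in D) ->
  vcv hs a x -> vcv hs b y -> cvC (fun k => w (a k) (b k)) (ext x y).
Proof.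
move=> ha hb va vb.
apply: (cvC_ext (u := fun k => polq (dq w) (a k) (b k))).
  by move=> k; rewrite (polar_dq hDl hw hwp).
have hc : forall c : C, (forall k, a k + c *: b k \in D) /\
     vcv hs (fun k => a k + c *: b k) (x + c *: y).
  move=> c; split; first by move=> k; apply: (lsD hDl); [exact: ha | apply: (lsZ hDl)].
  exact: (vcv_add va (vcv_scale c vb)).
apply: cvC_polq.
- have [h1 h2] := hc 1.
  have e : forall z : H, 1 *: z = z by move=> z; rewrite scale1r.
  apply: (cvR_ext (u := fun k => dq w (a k + 1 *: b k))); first by move=> k; rewrite e.
  have ey : x + y = x + 1 *: y by rewrite scale1r.
  by rewrite ey; apply: E_spec.
- by have [h1 h2] := hc (-1); apply: E_spec.
- by have [h1 h2] := hc ii; apply: E_spec.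
- by have [h1 h2] := hc (- ii); apply: E_spec.
Qed.

Lemma ext_in x y : x \in D -> y \in D -> ext x y = w x y.
Proof.
move=> hx hy.
have := ext_lim (a := fun _ => x) (b := fun _ => y) (fun _ => hx) (fun _ => hy)
  (vcv_const hs x) (vcv_const hs y).
move/cvC_uniq; apply; exact: cvC_const.
Qed.

Lemma ext_sesq : sesq [set: H] ext.
Proof.
split => al x y z _ _ _.
- have h := ext_lim (a := fun k => al *: app x k + app y k) (b := app z)
    (fun k => lsD hDl (lsZ hDl al (appD x k)) (appD y k)) (@appD z)
    (vcv_add (vcv_scale al (appV x)) (appV y)) (appV z).
  apply: (cvC_uniq h).
  apply: (cvC_ext (u := fun k => al * w (app x k) (app z k) + w (app y k) (app z k))).
    by move=> k; rewrite hw.1 // ?appD.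
  apply: cvC_add; first apply: cvC_mul; apply: ext_lim; exact: appD || exact: appV.
- have h := ext_lim (a := app z) (b := fun k => al *: app x k + app y k) (@appD z)
    (fun k => lsD hDl (lsZ hDl al (appD x k)) (appD y k))
    (appV z) (vcv_add (vcv_scale al (appV x)) (appV y)).
  apply: (cvC_uniq h).
  apply: (cvC_ext (u := fun k => Num.conj al * w (app z k) (app x k) + w (app z k) (app y k))).
    by move=> k; rewrite hw.2 // ?appD.
  apply: cvC_add; first apply: cvC_mul; apply: ext_lim; exact: appD || exact: appV.
Qed.

Lemma E_ge0 x : 0 <= E x.
Proof.
apply: (cvR_le (u := fun _ => 0) _ (cvR_const 0) (E_spec (@appD x) (appV x))).
by move=> k; apply: (dq_ge0 hwp (appD x k)).
Qed.

Lemma ext_diag x : ext x x = (E x)%:C%C.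
Proof.
have h := ext_lim (@appD x) (@appD x) (appV x) (appV x).
apply: (cvC_uniq h); apply: (cvC_ext (u := fun k => (dq w (app x k))%:C%C)).
  by move=> k; rewrite (dqE hwp) ?appD.
by apply: cvC_real; apply: E_spec; [exact: appD | exact: appV].
Qed.

Lemma dq_ext x : dq ext x = E x.
Proof. by rewrite /dq ext_diag. Qed.

Lemma ext_pos x : x \in [set: H] -> 0 <= ext x x.
Proof. by move=> _; rewrite ext_diag ler0c E_ge0. Qed.

Lemma ip_b1 p : p \in [set: H] -> dq (ip hs) p <= 1 * n2 hs p.
Proof. by rewrite mul1r. Qed.

Lemma ext_bound x : dq ext x <= M * n2 hs x.
Proof.
rewrite dq_ext.
have h1 := diag_in (lsT H) (ipS hs) (ipP hs) ltr01 ip_b1 (fun k => inT (app x k)) (inT x) (appV x).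
apply: (cvR_le _ (E_spec (@appD x) (appV x)) (cvR_scale M h1)).
by move=> k; apply: hwb; apply: appD.
Qed.

Variables (t : H -> H -> C) (K : R).
Hypothesis ht : sesq [set: H] t.
Hypothesis htp : forall x, x \in [set: H] -> 0 <= t x x.
Hypothesis K0 : 0 < K.
Hypothesis htb : forall p, p \in [set: H] -> dq t p <= K * n2 hs p.

Lemma t_lim x : cvR (fun k => dq t (app x k)) (dq t x).
Proof. exact: (diag_in (lsT H) ht htp K0 htb (fun k => inT (app x k)) (inT x) (appV x)). Qed.

Lemma ext_ge : (forall p, p \in D -> dq t p <= dq w p) -> forall x, dq t x <= dq ext x.
Proof.
move=> h x; rewrite dq_ext.
apply: (cvR_le _ (t_lim x) (E_spec (@appD x) (appV x))).
by move=> k; apply: h; apply: appD.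
Qed.

Lemma ext_le : (forall p, p \in D -> dq w p <= dq t p) -> forall x, dq ext x <= dq t x.
Proof.
move=> h x; rewrite dq_ext.
apply: (cvR_le _ (E_spec (@appD x) (appV x)) (t_lim x)).
by move=> k; apply: h; apply: appD.
Qed.

End Ext.

Section Lim.
Variables (R : realType) (H : lmodType R[i]).
Local Notation C := R[i].
Variables (Dm : set H) (u : nat -> H -> H -> C) (Lf : H -> R).
Hypothesis hDm : lin_subspace Dm.
Hypothesis hu : forall n, sesq Dm (u n).
Hypothesis hup : forall n x, x \in Dm -> 0 <= u n x x.
Hypothesis hL : forall p, p \in Dm -> cvR (fun n => dq (u n) p) (Lf p).

Definition lim := polq Lf.

Lemma lim_cv x y : x \in Dm -> y \in Dm -> cvC (fun n => u n x y) (lim x y).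
Proof.
move=> hx hy.
apply: (cvC_ext (u := fun n => polq (dq (u n)) x y)).
  by move=> n; rewrite (polar_dq hDm (hu n) (hup n)).
apply: (cvC_polq (a := fun _ => x) (b := fun _ => y)); apply: hL.
- exact: lsD.
- by apply: lsD => //; apply: lsZ.
- by apply: lsD => //; apply: lsZ.
- by apply: lsD => //; apply: lsZ.
Qed.

Lemma lim_sesq : sesq Dm lim.
Proof.
split => a x y z hx hy hz.
- have hxy : a *: x + y \in Dm by apply: lsD => //; apply: lsZ.
  apply: (cvC_uniq (lim_cv hxy hz)).
  apply: (cvC_ext (u := fun n => a * u n x z + u n y z)).
    by move=> n; rewrite (hu n).1.
  by apply: cvC_add; [apply: cvC_mul|]; apply: lim_cv.
- have hxy : a *: x + y \in Dm by apply: lsD => //; apply: lsZ.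
  apply: (cvC_uniq (lim_cv hz hxy)).
  apply: (cvC_ext (u := fun n => Num.conj a * u n z x + u n z y)).
    by move=> n; rewrite (hu n).2.
  by apply: cvC_add; [apply: cvC_mul|]; apply: lim_cv.
Qed.

Lemma lim_diag x : x \in Dm -> lim x x = (Lf x)%:C%C.
Proof.
move=> hx; apply: (cvC_uniq (lim_cv hx hx)).
apply: (cvC_ext (u := fun n => (dq (u n) x)%:C%C)).
  by move=> n; rewrite (dqE (hup n)).
by apply: cvC_real; apply: hL.
Qed.

Lemma Lf_ge0 x : x \in Dm -> 0 <= Lf x.
Proof.
move=> hx; apply: (cvR_le (u := fun _ => 0) _ (cvR_const 0) (hL hx)).
by move=> n; apply: (dq_ge0 (hup n)).
Qed.

Lemma dq_lim x : x \in Dm -> dq lim x = Lf x.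
Proof. by move=> hx; rewrite /dq lim_diag. Qed.

Lemma lim_pos x : x \in Dm -> 0 <= lim x x.
Proof. by move=> hx; rewrite lim_diag // ler0c Lf_ge0. Qed.

End Lim.

Lemma sub_in T (A B : set T) x : A `<=` B -> x \in A -> x \in B.
Proof. by rewrite !in_setE; apply. Qed.

Section Forms1.
Variables (R : realType) (H : lmodType R[i]) (hs : hilbert H).
Local Notation C := R[i].
Local Notation form := (Defs.form H).

Definition mk (A : set H) (f : H -> H -> C) : form :=
  Form A (fun x y => if (x \in A) && (y \in A) then f x y else 0).

Lemma mk_in A f x y : x \in A -> y \in A -> fval (mk A f) x y = f x y.
Proof. by move=> hx hy; rewrite /= hx hy. Qed.

Lemma mk_ext A f g : (forall x y, x \in A -> y \in A -> f x y = g x y) -> mk A f = mk A g.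
Proof.
move=> h; congr Form; apply: funext => x; apply: funext => y.
by case hx: (x \in A); case hy: (y \in A) => //=; rewrite h.
Qed.

Lemma form_eta (t : form) : is_form hs t -> t = mk (fdom t) (fval t).
Proof.
case: t => A f [_ _ _ h0] /=; congr Form; apply: funext => x; apply: funext => y.
case hx: (x \in A); case hy: (y \in A) => //=; apply: h0 => /=; rewrite hx hy; by case.
Qed.

Lemma form_eq (t s : form) : is_form hs t -> is_form hs s -> fdom t = fdom s ->
  (forall x y, x \in fdom t -> y \in fdom t -> fval t x y = fval s x y) -> t = s.
Proof.
move=> ht hs' hd hv; rewrite (form_eta ht) (form_eta hs') -hd; exact: mk_ext.
Qed.

Lemma form_addE (t s : form) : form_add t s = mk (fdom t `&` fdom s) (fun x y => fval t x y + fval s x y).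
Proof. by []. Qed.

Lemma form_addC (t s : form) : form_add t s = form_add s t.
Proof.
rewrite !form_addE setIC; apply: mk_ext => x y _ _; exact: addrC.
Qed.

Lemma sesq_sub (A B : set H) f : A `<=` B -> sesq B f -> sesq A f.
Proof.
move=> hAB [h1 h2]; split => a x y z hx hy hz.
- by apply: h1; apply: sub_in hAB _.
- by apply: h2; apply: sub_in hAB _.
Qed.

Lemma sesq_mk A f : lin_subspace A -> sesq A f -> sesq A (fval (mk A f)).
Proof.
move=> hA [h1 h2]; split => a x y z hx hy hz.
- have hxy : a *: x + y \in A by apply: (lsD hA) => //; apply: (lsZ hA).
  by rewrite !mk_in // h1.
- have hxy : a *: x + y \in A by apply: (lsD hA) => //; apply: (lsZ hA).
  by rewrite !mk_in // h2.
Qed.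

Lemma is_form_mk A f : dense_subspace hs A -> sesq A f -> is_form hs (mk A f).
Proof.
move=> hA hf; have [h1 h2] := sesq_mk hA.1 hf; split => //=.
move=> x y; case hx: (x \in A); case hy: (y \in A) => //= h; exfalso; exact: h.
Qed.

Lemma dense_T : dense_subspace hs [set: H].
Proof.
split; first exact: lsT.
move=> x e e0; exists x; split; first exact: inT.
by rewrite subrr hnormE n20 sqrtr0.
Qed.

Lemma form_sesq (t : form) : is_form hs t -> sesq (fdom t) (fval t).
Proof. by case=> _ h1 h2 _; split. Qed.
Lemma form_ls (t : form) : is_form hs t -> lin_subspace (fdom t).
Proof. by case=> [[]]. Qed.

Definition Bd (t : form) := exists M : R, 0 < M /\
  forall p, p \in fdom t -> dq (fval t) p <= M * n2 hs p.

Lemma n2_eq0 x : n2 hs x = 0 -> x = 0.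
Proof.
move=> h; apply: (@ip_eq0 _ _ hs).
have [e _] := ge0C (ip_ge0 hs x); rewrite e; rewrite /n2 /dq in h; by rewrite h.
Qed.

Lemma bounded_Bd (t : form) : is_form hs t -> positive_form t -> bounded_form hs t -> Bd t.
Proof.
move=> ht hp [M hM].
have hls := form_ls ht; have hf := form_sesq ht.
exists (`|M| + 1); split; first by rewrite ltr_wpDl.
move=> p hpD.
have [n0|nz] := eqVneq (n2 hs p) 0.
  rewrite n0 mulr0 (n2_eq0 n0) /dq (s0l hls hf) ?ls0 //.
have n2p : 0 < n2 hs p by rewrite lt_def nz n2_ge0.
set r := Num.sqrt (n2 hs p).
have r0 : 0 < r by rewrite sqrtr_gt0.
have rr : r ^+ 2 = n2 hs p by rewrite sqr_sqrtr // ltW.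
set q := (r^-1)%:C%C *: p.
have hq : q \in fdom t by apply: (lsZ hls).
have cc : Re ((r^-1)%:C%C * Num.conj (r^-1)%:C%C) = r^-2.
  by rewrite conj_real cReM /= mulr0 subr0 -invfM expr2.
have nq : hnorm hs q = 1.
  by rewrite hnormE /q n2Z cc -rr mulVf ?sqrtr1 // expf_neq0 // gt_eqF.
have := hM q hq nq.
rewrite (dqE hp hq) ger0_norm ?ler0c ?(dq_ge0 hp) // lecR => hq1.
rewrite /q (dqZ hls hf) // cc in hq1.
rewrite -rr.
have : dq (fval t) p <= M * r ^+ 2.
  have -> : dq (fval t) p = r ^+ 2 * (r ^- 2 * dq (fval t) p).
    by rewrite mulrA mulfV ?mul1r // expf_neq0 // gt_eqF.
  by rewrite [M * _]mulrC ler_pM2l // exprn_gt0.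
move=> h; apply: (le_trans h); rewrite ler_pM2r ?exprn_gt0 //.
by apply: (le_trans (ler_norm M)); rewrite lerDl.
Qed.

Lemma Bd_bounded (t : form) : is_form hs t -> positive_form t -> Bd t -> bounded_form hs t.
Proof.
move=> ht hp [M [M0 hM]]; exists M => x hx nx.
have n1 : n2 hs x = 1.
  rewrite hnormE in nx; rewrite -(sqr_sqrtr (n2_ge0 hs x)) nx; exact: expr1n.
rewrite (dqE hp hx) ger0_norm ?ler0c ?(dq_ge0 hp) // lecR.
by have := hM x hx; rewrite n1 mulr1.
Qed.

End Forms1.

Section Main1.
Variables (R : realType) (H : lmodType R[i]) (hs : hilbert H).
Local Notation C := R[i].
Local Notation form := (Defs.form H).

Lemma sesq_add (A : set H) (f g : H -> H -> C) : sesq A f -> sesq A g -> sesq A (fun x y => f x y + g x y).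
Proof.
move=> [f1 f2] [g1 g2]; split => a x y z hx hy hz.
- by rewrite f1 // g1 //; ring.
- by rewrite f2 // g2 //; ring.
Qed.

Lemma dq_addf (f g : H -> H -> C) x : dq (fun x y => f x y + g x y) x = dq f x + dq g x.
Proof. by rewrite /dq cReD. Qed.

Lemma dq_mk (A : set H) (f : H -> H -> C) x : x \in A -> dq (fval (mk A f)) x = dq f x.
Proof. by move=> hx; rewrite /dq mk_in. Qed.

Lemma Bd_le (t s : form) : fdom t `<=` fdom s ->
  (forall p, p \in fdom t -> dq (fval t) p <= dq (fval s) p) -> Bd hs s -> Bd hs t.
Proof.
move=> hd hle [M [M0 hM]]; exists M; split => // p hp.
apply: (le_trans (hle p hp)); apply: hM; exact: sub_in hd hp.
Qed.

Lemma Vf_is (t : form) : Vf hs t -> is_form hs t. Proof. by case. Qed.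
Lemma Vf_pos (t : form) : Vf hs t -> forall x, x \in fdom t -> 0 <= fval t x x. Proof. by case. Qed.
Lemma Vf_Bd (t : form) : Vf hs t -> Bd hs t -> fdom t = [set: H].
Proof. by case=> h1 h2 h3 hb; apply: h3; apply: Bd_bounded. Qed.
Lemma Vf_bB (t : form) : Vf hs t -> bounded_form hs t -> Bd hs t.
Proof. by case=> h1 h2 h3 hb; apply: bounded_Bd. Qed.

Lemma Vf_mk (A : set H) (f : H -> H -> C) : dense_subspace hs A -> sesq A f -> (forall x, x \in A -> 0 <= f x x) ->
  (Bd hs (mk A f) -> A = [set: H]) -> Vf hs (mk A f).
Proof.
move=> hA hf hp hB.
have hi := is_form_mk hA hf.
have hp' : positive_form (mk A f) by move=> x hx; rewrite mk_in //; apply: hp.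
split => // hb; apply: hB; exact: bounded_Bd.
Qed.

Lemma dom_add (t s : form) : Vf hs t -> Vf hs s -> oplus_def hs t s ->
  fdom (form_add t s) = fdom t \/ fdom (form_add t s) = fdom s.
Proof.
move=> vt vs [hb|[hb|he]] /=.
- by right; rewrite (Vf_Bd vt (Vf_bB vt hb)) setTI.
- by left; rewrite (Vf_Bd vs (Vf_bB vs hb)) setIT.
- by left; rewrite he setIid.
Qed.

Lemma dq_add_in (t s : form) p : p \in fdom (form_add t s) ->
  dq (fval (form_add t s)) p = dq (fval t) p + dq (fval s) p.
Proof. by move=> hp; rewrite form_addE dq_mk // dq_addf. Qed.

Lemma in_add1 (t s : form) p : p \in fdom (form_add t s) -> p \in fdom t.
Proof. by rewrite /= in_setI => /andP[]. Qed.
Lemma in_add2 (t s : form) p : p \in fdom (form_add t s) -> p \in fdom s.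
Proof. by rewrite /= in_setI => /andP[]. Qed.

Lemma Vf_add (t s : form) : Vf hs t -> Vf hs s -> oplus_def hs t s -> Vf hs (form_add t s).
Proof.
move=> vt vs hd.
have hA : dense_subspace hs (fdom t `&` fdom s).
  by case: (dom_add vt vs hd) => /= ->; [case: (Vf_is vt) | case: (Vf_is vs)].
have ht := form_sesq (Vf_is vt); have hs' := form_sesq (Vf_is vs).
have sub1 : fdom t `&` fdom s `<=` fdom t by move=> x [].
have sub2 : fdom t `&` fdom s `<=` fdom s by move=> x [].
rewrite form_addE; apply: Vf_mk => //.
- by apply: sesq_add; apply: sesq_sub ht || apply: sesq_sub hs'.
- move=> x hx; apply: addr_ge0; [apply: (Vf_pos vt) | apply: (Vf_pos vs)];
    [exact: sub_in sub1 hx | exact: sub_in sub2 hx].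
- rewrite -form_addE => hb.
  have pt : forall p, p \in fdom (form_add t s) -> 0 <= dq (fval t) p.
    by move=> p hp; apply: (dq_ge0 (Vf_pos vt)); apply: in_add1 hp.
  have ps : forall p, p \in fdom (form_add t s) -> 0 <= dq (fval s) p.
    by move=> p hp; apply: (dq_ge0 (Vf_pos vs)); apply: in_add2 hp.
  have ee : fdom t `&` fdom s = fdom (form_add t s) by [].
  case: (dom_add vt vs hd) => he; rewrite ee he.
  + apply: (Vf_Bd vt); apply: (Bd_le (s := form_add t s)) hb.
      by rewrite he.
    move=> p hp; rewrite -he in hp; rewrite dq_add_in // lerDl; exact: ps.
  + apply: (Vf_Bd vs); apply: (Bd_le (s := form_add t s)) hb.
      by rewrite he.
    move=> p hp; rewrite -he in hp; rewrite dq_add_in // lerDr; exact: pt.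
Qed.

End Main1.

Section Main2.
Variables (R : realType) (H : lmodType R[i]) (hs : hilbert H).
Local Notation C := R[i].
Local Notation form := (Defs.form H).
Variables (D : set H) (hD : dense_subspace hs D).
Local Notation Q := (VfD hs D).

Lemma Q_Vf t : Q t -> Vf hs t. Proof. by case. Qed.
Lemma Q_cases t : Q t -> Bd hs t \/ (~ Bd hs t /\ fdom t = D).
Proof.
move=> [vt [hb|he]]; first by left; apply: Vf_bB.
by case: (pselect (Bd hs t)) => h; [left|right].
Qed.
Lemma Q_intro t : Vf hs t -> Bd hs t \/ fdom t = D -> Q t.
Proof.
move=> vt [hb|he]; split => //; last by right.
by left; apply: (Bd_bounded (Vf_is vt) (Vf_pos vt)).
Qed.
Lemma Q_BdT t : Q t -> Bd hs t -> fdom t = [set: H].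
Proof. by move=> qt; apply: Vf_Bd; apply: Q_Vf. Qed.

Lemma Vf0 : Vf hs (form0 H).
Proof.
split.
- split; first exact: dense_T.
  + by move=> * /=; rewrite mulr0 addr0.
  + by move=> * /=; rewrite mulr0 addr0.
  + by [].
- by move=> x _; rewrite /= lexx.
- by [].
Qed.

Lemma Q0 : Q (form0 H).
Proof.
apply: Q_intro; first exact: Vf0.
left; exists 1; split => // p _; rewrite mul1r /dq /=; exact: n2_ge0.
Qed.

Lemma Bd_add (t s : form) : Vf hs t -> Vf hs s -> Bd hs t -> Bd hs s -> Bd hs (form_add t s).
Proof.
move=> vt vs [M [M0 hM]] [N [N0 hN]]; exists (M + N); split; first by rewrite addr_gt0.
move=> p hp; rewrite dq_add_in // mulrDl; apply: lerD.
  by apply: hM; apply: in_add1 hp.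
by apply: hN; apply: in_add2 hp.
Qed.

Lemma QQ (t s : form) : Q t -> Q s -> oplus_def hs t s -> Q (form_add t s).
Proof.
move=> qt qs hd.
have vt := Q_Vf qt; have vs := Q_Vf qs.
apply: Q_intro; first exact: Vf_add.
case: (Q_cases qt) => [bt|[nbt dt]]; case: (Q_cases qs) => [bs|[nbs ds]].
- by left; apply: Bd_add.
- by right; rewrite /= (Q_BdT qt bt) setTI.
- by right; rewrite /= (Q_BdT qs bs) setIT.
- by right; rewrite /= dt ds setIid.
Qed.

Lemma KEY (x y : form) : Vf hs x -> Vf hs y -> oplus_def hs x y -> ~ Bd hs y ->
  fdom (form_add x y) = fdom y -> Q (form_add x y) -> fdom y = D.
Proof.
move=> vx vy hd nby he q.
case: (Q_cases q) => [b|[_ e]]; last by rewrite -he.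
exfalso; apply: nby; apply: (Bd_le (s := form_add x y)) b; first by rewrite he.
move=> p hp; rewrite -he in hp; rewrite dq_add_in // lerDr.
by apply: (dq_ge0 (Vf_pos vx)); apply: in_add1 hp.
Qed.

Lemma case_right (x y : form) : Vf hs x -> Vf hs y -> oplus_def hs x y ->
  Q x -> Q (form_add x y) -> Q y.
Proof.
move=> vx vy hd qx qs.
case: (pselect (Bd hs y)) => nby; first by apply: Q_intro => //; left.
apply: Q_intro => //; right; apply: (KEY vx vy hd nby) => //.
case: hd => [hb|[hb|he]] /=.
- by rewrite (Vf_Bd vx (Vf_bB vx hb)) setTI.
- by exfalso; apply: nby; apply: Vf_bB.
- by rewrite he setIid.
Qed.

Lemma oplus_sym (x y : form) : oplus_def hs x y -> oplus_def hs y x.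
Proof. by case=> [h|[h|h]]; [right; left | left | right; right]. Qed.

Lemma sub_gea_part : sub_gea (Vf hs) (oplus_def hs) (@form_add R H) (form0 H) Q.
Proof.
split; [exact: Q_Vf | exact: Q0 |].
move=> x y vx vy hd [[qx qy]|[[qx qs]|[qy qs]]].
- by split => //; apply: QQ.
- by split => //; apply: case_right qs.
- have qx : Q x.
    rewrite form_addC in qs; exact: (case_right vy vx (oplus_sym hd) qy qs).
  by split.
Qed.

Lemma total_part (t s : form) : Q t -> Q s -> restr_def (oplus_def hs) (@form_add R H) Q t s.
Proof.
move=> qt qs.
have hd : oplus_def hs t s.
  case: (Q_cases qt) => [bt|[nbt dt]].
    by left; apply: (Bd_bounded (Vf_is (Q_Vf qt)) (Vf_pos (Q_Vf qt))).
  case: (Q_cases qs) => [bs|[nbs ds]].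
    by right; left; apply: (Bd_bounded (Vf_is (Q_Vf qs)) (Vf_pos (Q_Vf qs))).
  by right; right; rewrite dt ds.
by split => //; apply: QQ.
Qed.

End Main2.

Section Main3.
Variables (R : realType) (H : lmodType R[i]) (hs : hilbert H).
Local Notation C := R[i].
Local Notation form := (Defs.form H).
Variables (D : set H) (hD : dense_subspace hs D).
Local Notation Q := (VfD hs D).

Lemma extend (w : H -> H -> C) : sesq D w -> (forall x, x \in D -> 0 <= w x x) ->
  (exists M, 0 < M /\ forall p, p \in D -> dq w p <= M * n2 hs p) ->
  exists z : form, [/\ Vf hs z, Bd hs z, fdom z = [set: H],
    (forall x y, x \in D -> y \in D -> fval z x y = w x y) &
    (forall t : form, Vf hs t -> fdom t = [set: H] -> Bd hs t ->
      ((forall p, p \in D -> dq (fval t) p <= dq w p) -> forall x, dq (fval t) x <= dq (fval z) x) /\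
      ((forall p, p \in D -> dq w p <= dq (fval t) p) -> forall x, dq (fval z) x <= dq (fval t) x))].
Proof.
move=> hw hwp [M [M0 hwb]].
set e := ext hD hw hwp M0 hwb.
have es : sesq [set: H] e := ext_sesq hD hw hwp M0 hwb.
have ep : forall x, x \in [set: H] -> 0 <= e x x := ext_pos hD hw hwp M0 hwb.
have eb : Bd hs (mk [set: H] e).
  by exists M; split => // p hp; rewrite dq_mk // ext_bound.
exists (mk [set: H] e); split => //.
- by apply: Vf_mk => //; exact: dense_T.
- by move=> x y hx hy; rewrite mk_in ?inT // /e ext_in.
- move=> t vt dt [K [K0 hK]].
  have ht : sesq [set: H] (fval t) by rewrite -dt; exact: (form_sesq (Vf_is vt)).
  have htp : forall x, x \in [set: H] -> 0 <= fval t x x by rewrite -dt; exact: (Vf_pos vt).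
  have htb : forall p, p \in [set: H] -> dq (fval t) p <= K * n2 hs p by rewrite -dt.
  split => h x; rewrite dq_mk ?inT //.
  + exact: (ext_ge hD hw hwp M0 hwb ht htp K0 htb h).
  + exact: (ext_le hD hw hwp M0 hwb ht htp K0 htb h).
Qed.

End Main3.

Section Main4.
Variables (R : realType) (H : lmodType R[i]) (hs : hilbert H).
Local Notation C := R[i].
Local Notation form := (Defs.form H).
Variables (D : set H) (hD : dense_subspace hs D).
Local Notation Q := (VfD hs D).
Local Notation IL := (ind_le Q (restr_def (oplus_def hs) (@form_add R H) Q) (@form_add R H)).

Definition le (x y : form) := fdom y `<=` fdom x /\
  forall p, p \in fdom y -> dq (fval x) p <= dq (fval y) p.

Lemma le_of_IL x y : IL x y -> le x y.
Proof.
move=> [z [qz [hd qs] <-]]; split; first by move=> p [].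
move=> p hp; rewrite dq_add_in // lerDl.
by apply: (dq_ge0 (Vf_pos (Q_Vf qz))); apply: in_add2 hp.
Qed.

Lemma sesq_diff (A : set H) f g : sesq A f -> sesq A g -> sesq A (fun x y => f x y - g x y).
Proof.
move=> [f1 f2] [g1 g2]; split => a x y z hx hy hz.
- by rewrite f1 // g1 //; ring.
- by rewrite f2 // g2 //; ring.
Qed.

Lemma dq_diff (f g : H -> H -> C) x : dq (fun x y => f x y - g x y) x = dq f x - dq g x.
Proof. by rewrite /dq cReD; congr (_ + _); case: (g x x). Qed.

Lemma IL_of_le x y : Q x -> Q y -> le x y -> IL x y.
Proof.
move=> qx qy [hsub hdq].
have vx := Q_Vf qx; have vy := Q_Vf qy.
set g := fun a b => fval y a b - fval x a b.
have gs : sesq (fdom y) g.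
  apply: sesq_diff; first exact: (form_sesq (Vf_is vy)).
  exact: (sesq_sub hsub (form_sesq (Vf_is vx))).
have dg : forall p, p \in fdom y -> dq g p = dq (fval y) p - dq (fval x) p.
  by move=> p hp; rewrite /g dq_diff.
have gp : forall p, p \in fdom y -> 0 <= g p p.
  move=> p hp; rewrite /g (dqE (Vf_pos vy) hp) (dqE (Vf_pos vx) (sub_in hsub hp)).
  by rewrite -rmorphB ler0c subr_ge0 hdq.
have hlsy := form_ls (Vf_is vy).
have fin : forall z : form, Vf hs z -> oplus_def hs x z ->
    fdom x `&` fdom z = fdom y ->
    (forall a b, a \in fdom y -> b \in fdom y -> fval z a b = g a b) -> form_add x z = y.
  move=> z vz hd hdom hv; apply: form_eq.
  - exact: (Vf_is (Vf_add vx vz hd)).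
  - exact: (Vf_is vy).
  - by [].
  - move=> a b ha hb; rewrite /= in ha hb; rewrite hdom in ha hb.
    by rewrite form_addE mk_in ?hdom // hv // /g addrC subrK.
have mkI : forall z, Q z -> oplus_def hs x z -> form_add x z = y -> IL x y.
  by move=> z qz hd e; exists z; split => //; split => //; rewrite e.
case: (Q_cases qy) => [by_|[nby dy]].
-
  have dyT := Q_BdT qy by_.
  have dxT : fdom x = [set: H] by apply/seteqP; split => // p _; apply: hsub; rewrite dyT.
  set z := mk [set: H] g.
  have gs' : sesq [set: H] g by rewrite -dyT.
  have gp' : forall p, p \in [set: H] -> 0 <= g p p by rewrite -dyT.
  have vz : Vf hs z by apply: Vf_mk => //; exact: dense_T.
  have bz : Bd hs z.
    have [M [M0 hM]] := by_; exists M; split => // p hp.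
    rewrite dq_mk // dg ?dyT //; apply: le_trans (hM p _); last by rewrite dyT.
    rewrite lerBlDr lerDl; apply: (dq_ge0 (Vf_pos vx)); rewrite dxT; exact: inT.
  have qz : Q z by apply: Q_intro => //; left.
  have hd : oplus_def hs x z by right; left; apply: Bd_bounded (Vf_is vz) (Vf_pos vz) bz.
  apply: (mkI z qz hd); apply: fin => //.
    by rewrite dxT dyT setIT.
  by move=> a b ha hb; rewrite mk_in ?inT.
-
  have gsD : sesq D g by rewrite -dy.
  have gpD : forall p, p \in D -> 0 <= g p p by rewrite -dy.
  have dxD : D `<=` fdom x by rewrite -dy.
  case: (pselect (exists M, 0 < M /\ forall p, p \in D -> dq g p <= M * n2 hs p)) => hB.
  + have [z [vz bz dz zv _]] := extend hD gsD gpD hB.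
    have nbx : ~ Bd hs x.
      move=> [Mx [Mx0 hMx]]; apply: nby.
      have [M [M0 hM]] := hB.
      exists (Mx + M); split; first by rewrite addr_gt0.
      move=> p hp; have := dg p hp; rewrite -dy in hM.
      have := hM p hp; have := hMx p (sub_in hsub hp).
      rewrite mulrDl; set a := dq (fval x) p; set b := dq (fval y) p; set c := dq g p.
      move=> h1 h2 h3; rewrite h3 in h2; lra.
    have dxD' : fdom x = D by case: (Q_cases qx) => [//|[]].
    have qz : Q z by apply: Q_intro => //; left.
    have hd : oplus_def hs x z by right; left; apply: Bd_bounded (Vf_is vz) (Vf_pos vz) bz.
    apply: (mkI z qz hd); apply: fin => //.
      by rewrite dz setIT dxD' dy.
    by move=> a b ha hb; rewrite zv // -dy.
  + set z := mk D g.
    have vz : Vf hs z.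
      apply: Vf_mk => //.
      move=> [M [M0 hM]]; exfalso; apply: hB; exists M; split => // p hp.
      by have := hM p hp; rewrite dq_mk.
    have qz : Q z by apply: Q_intro => //; right.
    have hd : oplus_def hs x z.
      case: (Q_cases qx) => [bx|[_ dx]].
        by left; apply: Bd_bounded (Vf_is vx) (Vf_pos vx) bx.
      by right; right; rewrite dx.
    apply: (mkI z qz hd); apply: fin => //.
      by rewrite /= dy; apply: setIidr.
    by move=> a b ha hb; rewrite mk_in // -dy.
Qed.

End Main4.

Section RMono.
Variable R : realType.

Lemma cvR_shift (u : nat -> R) l k : cvR u l -> cvR (fun m => u (m + k)%N) l.
Proof.
move=> h e e0; have [N hN] := h e e0; exists N => n hn; apply: hN.
by apply: leq_trans hn _; rewrite leq_addr.
Qed.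

Lemma incr_mono (u : nat -> R) : (forall n, u n <= u n.+1) ->
  forall n m, (n <= m)%N -> u n <= u m.
Proof.
move=> inc n m /subnK <-; elim: (m - n)%N => [|k IH]; first by rewrite add0n.
by rewrite addSn; apply: le_trans IH _.
Qed.

Lemma cvR_incr_ge (u : nat -> R) l : (forall n, u n <= u n.+1) -> cvR u l -> forall n, u n <= l.
Proof.
move=> inc h n.
apply: (cvR_le (u := fun _ => u n) _ (cvR_const _) (cvR_shift n h)).
by move=> m; apply: incr_mono => //; rewrite leq_addl.
Qed.

Lemma cvR_decr_le (u : nat -> R) l : (forall n, u n.+1 <= u n) -> cvR u l -> forall n, l <= u n.
Proof.
move=> dec h n.
have inc : forall n, - u n <= - u n.+1 by move=> k; rewrite lerN2.
have h' : cvR (fun k => - u k) (- l).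
  have h2 := cvR_scale (-1) h; rewrite mulN1r in h2.
  by apply: cvR_ext h2 => k; rewrite mulN1r.
by have := cvR_incr_ge inc h' n; rewrite lerN2.
Qed.

Lemma cvR_decr (u : nat -> R) M : (forall n, u n.+1 <= u n) -> (forall n, M <= u n) ->
  exists l, cvR u l.
Proof.
move=> dec bd.
have inc : forall k, - u k <= - u k.+1 by move=> k; rewrite lerN2.
have bd' : forall k, - u k <= - M by move=> k; rewrite lerN2.
have [l hl] := cvR_incr inc bd'.
exists (- l); have h2 := cvR_scale (-1) hl; rewrite mulN1r in h2.
by apply: cvR_ext h2 => k; rewrite mulN1r opprK.
Qed.

End RMono.

Section Main5.
Variables (R : realType) (H : lmodType R[i]) (hs : hilbert H).
Local Notation C := R[i].
Local Notation form := (Defs.form H).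

Lemma build (A : set H) (v : nat -> form) (Lf : H -> R) : lin_subspace A ->
  (forall n, Vf hs (v n)) -> (forall n, A `<=` fdom (v n)) ->
  (forall p, p \in A -> cvR (fun n => dq (fval (v n)) p) (Lf p)) ->
  exists w : H -> H -> C, [/\ sesq A w, (forall x, x \in A -> 0 <= w x x) &
     forall p, p \in A -> dq w p = Lf p].
Proof.
move=> hA hv hsub hL.
have hu : forall n, sesq A (fval (v n)).
  by move=> n; apply: (sesq_sub (hsub n)); apply: form_sesq; apply: Vf_is.
have hup : forall n x, x \in A -> 0 <= fval (v n) x x.
  by move=> n x hx; apply: (Vf_pos (hv n)); apply: sub_in (hsub n) hx.
exists (lim Lf); split.
- exact: lim_sesq hA hu hup hL.
- by move=> x hx; apply: (lim_pos hA hu hup hL).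
- by move=> p hp; apply: (dq_lim hA hu hup hL).
Qed.

Lemma choose_lim (A : set H) (v : nat -> form) :
  (forall p, p \in A -> exists L, cvR (fun n => dq (fval (v n)) p) L) ->
  exists Lf : H -> R, forall p, p \in A -> cvR (fun n => dq (fval (v n)) p) (Lf p).
Proof.
move=> h.
have : forall p, exists L, p \in A -> cvR (fun n => dq (fval (v n)) p) L.
  move=> p; case: (pselect (p \in A)) => hp; last by exists 0.
  by have [L hL] := h p hp; exists L.
by move/choice => [Lf hLf]; exists Lf.
Qed.

End Main5.

Section Main6.
Variables (R : realType) (H : lmodType R[i]) (hs : hilbert H).
Local Notation C := R[i].
Local Notation form := (Defs.form H).
Variables (D : set H) (hD : dense_subspace hs D).
Local Notation Q := (VfD hs D).
Local Notation IL := (ind_le Q (restr_def (oplus_def hs) (@form_add R H) Q) (@form_add R H)).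

Lemma up_part : mono_dedekind_up Q IL.
Proof.
move=> u qu inc [b [qb ub]].
have lu : forall n, le (u n) (u n.+1) by move=> n; apply: le_of_IL (inc n).
have lb : forall n, le (u n) b by move=> n; apply: le_of_IL (ub n).
set A := fdom b.
have vb := Q_Vf qb.
have hAd : dense_subspace hs A by case: (Vf_is vb).
have hA : lin_subspace A := hAd.1.
have sub : forall n, A `<=` fdom (u n) by move=> n; case: (lb n).
have cv : forall p, p \in A -> exists L, cvR (fun n => dq (fval (u n)) p) L.
  move=> p hp; apply: (cvR_incr (M := dq (fval b) p)).
  + by move=> n; apply: (lu n).2; apply: sub_in (sub n.+1) hp.
  + by move=> n; apply: (lb n).2.
have [Lf hLf] := choose_lim cv.
have [w [ws wp wd]] := build hA (fun n => Q_Vf (qu n)) sub hLf.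
have Lge : forall n p, p \in A -> dq (fval (u n)) p <= Lf p.
  move=> n p hp; apply: (cvR_incr_ge _ (hLf p hp)) => k.
  by apply: (lu k).2; apply: sub_in (sub k.+1) hp.
have Lle : forall c : form, (forall n, le (u n) c) -> forall p, p \in A -> p \in fdom c ->
    Lf p <= dq (fval c) p.
  move=> c hc p hp hpc.
  apply: (cvR_le (v := fun _ => dq (fval c) p) _ (hLf p hp) (cvR_const _)).
  by move=> n; apply: (hc n).2.
suff [s [qs h1 h2]] : exists s, [/\ Q s, forall n, le (u n) s &
    forall c, Q c -> (forall n, le (u n) c) -> le s c].
  exists s; split => //.
  - by move=> n; apply: IL_of_le.
  - move=> c qc hc; apply: IL_of_le => //; apply: h2 => // n; exact: le_of_IL (hc n).
case: (Q_cases qb) => [bb|[nbb db]].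
-
  have AT : A = [set: H] := Q_BdT qb bb.
  set s := mk A w.
  have bs : Bd hs s.
    have [M [M0 hM]] := bb; exists M; split => // p hp.
    rewrite dq_mk // wd //; apply: le_trans (hM p hp).
    by apply: Lle => //; move=> n; exact: lb.
  have vs : Vf hs s by apply: Vf_mk => // _.
  exists s; split.
  + by apply: Q_intro => //; left.
  + move=> n; split; first exact: sub.
    by move=> p hp; rewrite dq_mk // wd //; apply: Lge.
  + move=> c qc hc; split; first by move=> p _; rewrite /= AT.
    move=> p hp; have hpA : p \in A by rewrite AT; apply: inT.
    by rewrite dq_mk // wd //; apply: Lle.
-
  have AD : A = D := db.
  have wsD : sesq D w by rewrite -AD.
  have wpD : forall x, x \in D -> 0 <= w x x by rewrite -AD.
  case: (pselect (exists M, 0 < M /\ forall p, p \in D -> dq w p <= M * n2 hs p)) => hB.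
  + have [z [vz bz dz zv zp]] := extend hD wsD wpD hB.
    have dzw : forall p, p \in D -> dq (fval z) p = dq w p by move=> p hp; rewrite /dq zv.
    have bun : forall n, Bd hs (u n).
      move=> n; case: (Q_cases (qu n)) => [//|[nb du]]; exfalso; apply: nb.
      have [M [M0 hM]] := hB; exists M; split => // p hp.
      rewrite du in hp; apply: le_trans (hM p hp).
      by rewrite wd ?AD //; apply: Lge; rewrite AD.
    exists z; split.
    * by apply: Q_intro => //; left.
    * move=> n; split; first by rewrite dz (Q_BdT (qu n) (bun n)).
      move=> p _; apply: ((zp (u n) (Q_Vf (qu n)) (Q_BdT (qu n) (bun n)) (bun n)).1).
      by move=> q hq; rewrite wd ?AD //; apply: Lge; rewrite AD.
    * move=> c qc hc; case: (Q_cases qc) => [bc|[nbc dc]].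
      - split; first by rewrite dz.
        move=> p _; apply: ((zp c (Q_Vf qc) (Q_BdT qc bc) bc).2).
        move=> q hq; rewrite wd ?AD //; apply: Lle => //; first by rewrite AD.
        by rewrite (Q_BdT qc bc); apply: inT.
      - split; first by rewrite dz.
        move=> p hp; rewrite dc in hp; rewrite dzw // wd ?AD //.
        by apply: Lle => //; [rewrite AD | rewrite dc].
  + set s := mk A w.
    have vs : Vf hs s.
      apply: Vf_mk => // -[M [M0 hM]]; exfalso; apply: hB; exists M; split => // p hp.
      by have := hM p; rewrite dq_mk AD //; apply.
    exists s; split.
    * by apply: Q_intro => //; right.
    * move=> n; split; first exact: sub.
      by move=> p hp; rewrite dq_mk // wd //; apply: Lge.
    * move=> c qc hc; case: (Q_cases qc) => [bc|[nbc dc]].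
      - exfalso; apply: hB; have [M [M0 hM]] := bc; exists M; split => // p hp.
        have hpc : p \in fdom c by rewrite (Q_BdT qc bc); apply: inT.
        apply: le_trans (hM p hpc); rewrite wd ?AD //; apply: Lle => //; by rewrite AD.
      - split; first by rewrite /= AD dc.
        move=> p hp; have hpA : p \in A by rewrite AD -dc.
        by rewrite dq_mk // wd //; apply: Lle.
Qed.

End Main6.

Section Main7.
Variables (R : realType) (H : lmodType R[i]) (hs : hilbert H).
Local Notation C := R[i].
Local Notation form := (Defs.form H).
Variables (D : set H) (hD : dense_subspace hs D).
Local Notation Q := (VfD hs D).
Local Notation IL := (ind_le Q (restr_def (oplus_def hs) (@form_add R H) Q) (@form_add R H)).

Lemma down_part : mono_dedekind_down Q IL.
Proof.
move=> u qu dec.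
have ld : forall n, le (u n.+1) (u n) by move=> n; apply: le_of_IL (dec n).
have chain : forall n m, (n <= m)%N -> fdom (u n) `<=` fdom (u m) /\
    forall p, p \in fdom (u n) -> dq (fval (u m)) p <= dq (fval (u n)) p.
  move=> n m /subnK <-; elim: (m - n)%N => [|k [IH1 IH2]].
    by rewrite add0n; split; [move=> p hp | move=> p _; exact: lexx].
  rewrite addSn; split.
    by move=> p hp; apply: (ld _).1; apply: IH1.
  move=> p hp; apply: le_trans (IH2 p hp).
  by apply: (ld _).2; apply: sub_in IH1 hp.
suff [s [qs h1 h2]] : exists s, [/\ Q s, forall n, le s (u n) &
    forall b, Q b -> (forall n, le b (u n)) -> le b s].
  exists s; split => //.
  - by move=> n; apply: IL_of_le.
  - move=> b qb hb; apply: IL_of_le => //; apply: h2 => // n; exact: le_of_IL (hb n).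
case: (pselect (exists N, Bd hs (u N))) => [[N bN]|nb].
- have dN : fdom (u N) = [set: H] := Q_BdT (qu N) bN.
  set v := fun m => u (m + N)%N.
  have dv : forall m, fdom (v m) = [set: H].
    move=> m; apply/seteqP; split => // p _; apply: (chain N (m + N)%N _).1.
      by rewrite leq_addl.
    by rewrite dN.
  have sub : forall m, [set: H] `<=` fdom (v m) by move=> m; rewrite dv.
  have cv : forall p, p \in [set: H] -> exists L, cvR (fun n => dq (fval (v n)) p) L.
    move=> p hp; apply: (cvR_decr (M := 0)).
    + move=> n; rewrite /v addSn; apply: (ld _).2; by rewrite -/(v n) dv.
    + by move=> n; apply: (dq_ge0 (Vf_pos (Q_Vf (qu _)))); rewrite -/(v n) dv.
  have [Lf hLf] := choose_lim cv.
  have [w [ws wp wd]] := build (lsT H) (fun n => Q_Vf (qu _)) sub hLf.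
  have Ldec : forall m p, dq (fval (v m)) p >= Lf p -> True by [].
  have Lle : forall m p, Lf p <= dq (fval (v m)) p.
    move=> m p; apply: (cvR_decr_le _ (hLf p (inT p))) => n.
    rewrite /v addSn; apply: (ld _).2; by have := inT p; rewrite -(dv n); apply.
  set s := mk [set: H] w.
  have bs : Bd hs s.
    have [M [M0 hM]] := bN; exists M; split => // p hp.
    rewrite dq_mk // wd //; apply: le_trans (Lle 0%N p) _.
    by rewrite /v add0n; apply: hM; rewrite dN.
  have vs : Vf hs s by apply: Vf_mk => //; exact: dense_T.
  exists s; split.
  + by apply: Q_intro => //; left.
  + move=> n; split => // p hp; rewrite dq_mk ?inT // wd ?inT //.
    apply: le_trans (Lle n p) _; rewrite /v; apply: (chain n (n + N)%N _).2 => //.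
    by rewrite leq_addr.
  + move=> b qb hb; split.
      by move=> p _; apply: (hb N).1; rewrite dN.
    move=> p _; rewrite dq_mk ?inT // wd ?inT //.
    apply: (cvR_le (u := fun _ => dq (fval b) p) _ (cvR_const _) (hLf p (inT p))).
    by move=> m; apply: (hb _).2; rewrite -/(v m) dv; apply: inT.
- have du : forall n, fdom (u n) = D.
    move=> n; case: (Q_cases (qu n)) => [bn|[_ ->] //]; exfalso; apply: nb; by exists n.
  have hA : lin_subspace D := hD.1.
  have sub : forall n, D `<=` fdom (u n) by move=> n; rewrite du.
  have cv : forall p, p \in D -> exists L, cvR (fun n => dq (fval (u n)) p) L.
    move=> p hp; apply: (cvR_decr (M := 0)).
    + by move=> n; apply: (ld _).2; rewrite du.
    + by move=> n; apply: (dq_ge0 (Vf_pos (Q_Vf (qu _)))); rewrite du.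
  have [Lf hLf] := choose_lim cv.
  have [w [ws wp wd]] := build hA (fun n => Q_Vf (qu _)) sub hLf.
  have Lle : forall m p, p \in D -> Lf p <= dq (fval (u m)) p.
    move=> m p hp; apply: (cvR_decr_le _ (hLf p hp)) => n.
    by apply: (ld _).2; rewrite du.
  have Lge : forall b : form, (forall n, le b (u n)) -> forall p, p \in D ->
      dq (fval b) p <= Lf p.
    move=> b hb p hp.
    apply: (cvR_le (u := fun _ => dq (fval b) p) _ (cvR_const _) (hLf p hp)).
    by move=> m; apply: (hb _).2; rewrite du.
  case: (pselect (exists M, 0 < M /\ forall p, p \in D -> dq w p <= M * n2 hs p)) => hB.
  + have [z [vz bz dz zv zp]] := extend hD ws wp hB.
    have dzw : forall p, p \in D -> dq (fval z) p = dq w p by move=> p hp; rewrite /dq zv.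
    exists z; split.
    * by apply: Q_intro => //; left.
    * move=> n; split; first by rewrite dz.
      by move=> p hp; rewrite du in hp; rewrite dzw // wd //; apply: Lle.
    * move=> b qb hb; case: (Q_cases qb) => [bb|[nbb db]].
      - split; first by rewrite (Q_BdT qb bb).
        move=> p _; apply: ((zp b (Q_Vf qb) (Q_BdT qb bb) bb).1).
        by move=> q hq; rewrite wd //; apply: Lge.
      - exfalso; apply: nbb; have [M [M0 hM]] := hB; exists M; split => // p hp.
        rewrite db in hp; apply: le_trans (hM p hp); rewrite wd //; exact: Lge.
  + set s := mk D w.
    have vs : Vf hs s.
      apply: Vf_mk => // -[M [M0 hM]]; exfalso; apply: hB; exists M; split => // p hp.
      by have := hM p; rewrite dq_mk //; apply.
    exists s; split.
    * by apply: Q_intro => //; right.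
    * move=> n; split; first by rewrite du.
      by move=> p hp; rewrite du in hp; rewrite dq_mk // wd //; apply: Lle.
    * move=> b qb hb; split; first by rewrite /= -(du 0%N); exact: (hb 0%N).1.
      by move=> p hp; rewrite dq_mk // wd //; apply: Lge.
Qed.

End Main7.

Local Close Scope classical_set_scope.
Local Close Scope ring_scope.

Theorem theorem5p7 (R : realType) (H : lmodType R[i]) (hs : hilbert H)
    (hinf : infinite_dim H) (D : set H) (hD : dense_subspace hs D) :
  [/\ sub_gea (Vf hs) (oplus_def hs) (@form_add R H) (form0 H) (VfD hs D),
      (forall t s, VfD hs D t -> VfD hs D s ->
         restr_def (oplus_def hs) (@form_add R H) (VfD hs D) t s),
      mono_dedekind_up (VfD hs D)
        (ind_le (VfD hs D) (restr_def (oplus_def hs) (@form_add R H) (VfD hs D))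
                (@form_add R H))
    & mono_dedekind_down (VfD hs D)
        (ind_le (VfD hs D) (restr_def (oplus_def hs) (@form_add R H) (VfD hs D))
                (@form_add R H))].
Proof.
split.
- exact: sub_gea_part.
- by move=> t s qt qs; apply: total_part.
- exact: (up_part hD).
- exact: (down_part hD).
Qed.
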